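(* (i) Let $n \ge 4$ be even. For every $\xi \in \mathbb{H} \cap \mathbb{D}$ there exists an ordered sample $x_1 < \dots < x_n$ of reals whose relative position of the maximum likelihood estimate is $\xi$. (ii) Let $n \ge 3$ be odd. Then there exists $\epsilon_n > 0$ such that for every $\xi \in \mathbb{H} \cap B(i, \epsilon_n)$ there is no ordered sample $x_1 < \dots < x_n$ of reals whose relative position of the maximum likelihood estimate is $\xi$.
   Context: $\mathbb{H} = \{\theta\in\mathbb{C}:\Im\theta>0\}$, $\mathbb{D}$ is the open unit disc, and $B(i,\epsilon)$ is the open disc of center $i$ and radius $\epsilon$. For an ordered real sample $x_1<\dots<x_n$ ($n\ge3$), the Cauchy maximum likelihood estimate $\hat\theta$ is the unique maximizer over $\theta=\mu+i\sigma\in\mathbb{H}$ of $\prod_{j=1}^n \frac{\sigma}{\pi((x_j-\mu)^2+\sigma^2)}$; it satisfies $|\hat\theta - (x_1+x_n)/2| \le (x_n-x_1)/2$. The relative position of $\hat\theta$ is $\xi = \frac{2\hat\theta - (x_n + x_1)}{x_n - x_1} \in \mathbb{H}\cap\mathbb{D}$. *)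

(* Defs.v *)
(* concrete reals R. Complex numbers theta = mu + i sigma and
   xi = a + i b are represented by their real and imaginary parts. *)
From Stdlib Require Import Reals Lra Lia.
Open Scope R_scope.

(* Ordered sample x_1 < ... < x_n, indexed here as x 0 < ... < x (n-1). *)
Definition strictly_ordered (n : nat) (x : nat -> R) : Prop :=
  forall i : nat, (S i < n)%nat -> x i < x (S i).

Fixpoint cauchy_lik (x : nat -> R) (n : nat) (mu sigma : R) : R :=
  match n with
  | O => 1
  | S k => cauchy_lik x k mu sigma * (sigma / (PI * ((x k - mu) ^ 2 + sigma ^ 2)))
  end.

Definition is_cauchy_mle (n : nat) (x : nat -> R) (mu sigma : R) : Prop :=
  0 < sigma /\
  forall mu' sigma' : R, 0 < sigma' ->
    cauchy_lik x n mu' sigma' <= cauchy_lik x n mu sigma.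

(* xi = a + i b equals (2 theta - (x_n + x_1)) / (x_n - x_1). *)
Definition relative_position (n : nat) (x : nat -> R) (mu sigma a b : R) : Prop :=
  a = (2 * mu - (x (n - 1)%nat + x 0%nat)) / (x (n - 1)%nat - x 0%nat) /\
  b = (2 * sigma) / (x (n - 1)%nat - x 0%nat).

Definition mle_relative_position (n : nat) (x : nat -> R) (a b : R) : Prop :=
  exists mu sigma, is_cauchy_mle n x mu sigma /\ relative_position n x mu sigma a b.

(* Main.v *)
Require Import Defs.
From Stdlib Require Import Reals Arith Lra Lia Psatz ZArith.
From Coquelicot Require Import Coquelicot.
Open Scope R_scope.


Definition gC (u mu s : R) := s / (PI * ((u - mu) ^ 2 + s ^ 2)).

Lemma gC_pos u mu s : 0 < s -> 0 < gC u mu s.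
Proof.
  intros Hs. unfold gC. apply Rdiv_lt_0_compat; auto.
  apply Rmult_lt_0_compat. apply PI_RGT_0.
  pose proof (pow2_ge_0 (u - mu)). pose proof (pow_lt s 2 Hs). lra.
Qed.

Lemma sq_pos x : x <> 0 -> 0 < x ^ 2.
Proof. intros H. replace (x^2) with (Rsqr x) by (unfold Rsqr; ring). apply Rsqr_pos_lt; auto. Qed.

Lemma sq_nn x : 0 <= x ^ 2.
Proof. apply pow2_ge_0. Qed.

Lemma sumsq_pos x b : 0 < b -> 0 < x ^ 2 + b ^ 2.
Proof. intros H. pose proof (pow2_ge_0 x). pose proof (pow_lt b 2 H). lra. Qed.

Lemma div_le_inv c X Y : 0 < X -> 0 < Y -> c * Y <= X -> c / X <= / Y.
Proof.
  intros HX HY H.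
  replace (c / X) with ((c * Y) * / (X * Y)) by (field; lra).
  replace (/ Y) with (X * / (X * Y)) by (field; lra).
  apply Rmult_le_compat_r; auto. left; apply Rinv_0_lt_compat, Rmult_lt_0_compat; auto.
Qed.

Lemma lik_S x k mu s : cauchy_lik x (S k) mu s = cauchy_lik x k mu s * gC (x k) mu s.
Proof. reflexivity. Qed.

Lemma lik_pos x k mu s : 0 < s -> 0 < cauchy_lik x k mu s.
Proof.
  intros Hs; induction k; simpl. lra.
  apply Rmult_lt_0_compat; auto. apply (gC_pos (x k) mu s Hs).
Qed.

Lemma lik_add x m k mu s :
  cauchy_lik x (m + k) mu s = cauchy_lik x m mu s * cauchy_lik (fun j => x (m + j)%nat) k mu s.
Proof.
  induction k. simpl. rewrite Nat.add_0_r; ring.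
  rewrite Nat.add_succ_r, !lik_S, IHk. ring.
Qed.

Lemma pair_ineq u v a b mu s : 0 < b -> 0 < s -> (u - a) * (v - a) = - b ^ 2 ->
  gC u mu s * gC v mu s <= gC u a b * gC v a b.
Proof.
  intros Hb Hs Hp. unfold gC.
  assert (HPI := PI_RGT_0).
  assert (Huv : (u - v) <> 0).
  { intro H0. assert (v = u) by lra. subst v.
    assert (0 < b * b) by nra. pose proof (Rle_0_sqr (u-a)) as Hq; unfold Rsqr in Hq. assert ((u-a)*(u-a) = -(b*b)) by (rewrite Hp; ring). lra. }
  assert (Hu2 : 0 < (u-v)^2) by (apply sq_pos; auto) .
  assert (E : b / (PI * ((u - a) ^ 2 + b ^ 2)) * (b / (PI * ((v - a) ^ 2 + b ^ 2)))
            = / (PI^2 * (u - v)^2)).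
  { assert (E2 : ((u - a) ^ 2 + b ^ 2) * ((v - a) ^ 2 + b ^ 2) = b^2 * (u-v)^2).
    { replace (u - v) with ((u-a) - (v-a)) by ring.
      replace (((u - a) ^ 2 + b ^ 2) * ((v - a) ^ 2 + b ^ 2)) with
        (((u-a)*(v-a))^2 + b^2 * ((u-a)^2 + (v-a)^2) + b^4) by ring.
      replace (b ^ 2 * ((u - a) - (v - a)) ^ 2) with
        (b^2 * ((u-a)^2 + (v-a)^2) - 2 * b^2 * ((u-a)*(v-a))) by ring.
      rewrite Hp. ring. }
    assert (0 < (u - a) ^ 2 + b ^ 2) by (apply sumsq_pos; auto).
    assert (0 < (v - a) ^ 2 + b ^ 2) by (apply sumsq_pos; auto).
    replace (b / (PI * ((u - a) ^ 2 + b ^ 2)) * (b / (PI * ((v - a) ^ 2 + b ^ 2))))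
      with (b^2 / (PI^2 * (((u - a) ^ 2 + b ^ 2) * ((v - a) ^ 2 + b ^ 2)))) by (field; lra).
    rewrite E2. field. split; lra. }
  rewrite E.
  set (A := (u - mu) ^ 2 + s ^ 2). set (B := (v - mu) ^ 2 + s ^ 2).
  assert (HA : 0 < A) by (unfold A; apply sumsq_pos; auto). assert (HB : 0 < B) by (unfold B; apply sumsq_pos; auto).
  assert (Key : s^2 * (u-v)^2 <= A * B).
  { unfold A, B.
    assert (Id : ((u - mu) ^ 2 + s ^ 2) * ((v - mu) ^ 2 + s ^ 2) - s^2 * (u-v)^2
                 = ((u-mu)*(v-mu) + s^2)^2) by ring.
    pose proof (pow2_ge_0 ((u-mu)*(v-mu)+s^2)). lra. }
  replace (s / (PI * A) * (s / (PI * B))) with (s^2 / (PI^2 * (A * B))) by (field; lra).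
  assert (HP2 : 0 < PI^2) by (apply pow_lt; lra).
  apply div_le_inv.
  - apply Rmult_lt_0_compat; auto. apply Rmult_lt_0_compat; auto.
  - apply Rmult_lt_0_compat; auto.
  - replace (s ^ 2 * (PI ^ 2 * (u - v) ^ 2)) with (PI^2 * (s^2 * (u-v)^2)) by ring.
    apply Rmult_le_compat_l; lra.
Qed.

Lemma pair_prod x y m mu s a b : 0 < s -> 0 < b ->
  (forall j, (j < m)%nat -> gC (x j) mu s * gC (y j) mu s <= gC (x j) a b * gC (y j) a b) ->
  cauchy_lik x m mu s * cauchy_lik y m mu s <= cauchy_lik x m a b * cauchy_lik y m a b.
Proof.
  intros Hs Hb H; induction m. simpl; lra.
  rewrite !lik_S.
  replace (cauchy_lik x m mu s * gC (x m) mu s * (cauchy_lik y m mu s * gC (y m) mu s))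
    with ((cauchy_lik x m mu s * cauchy_lik y m mu s) * (gC (x m) mu s * gC (y m) mu s)) by ring.
  replace (cauchy_lik x m a b * gC (x m) a b * (cauchy_lik y m a b * gC (y m) a b))
    with ((cauchy_lik x m a b * cauchy_lik y m a b) * (gC (x m) a b * gC (y m) a b)) by ring.
  apply Rmult_le_compat.
  - apply Rmult_le_pos; left; apply lik_pos; auto.
  - apply Rmult_le_pos; left; apply gC_pos; auto.
  - apply IHm; intros; apply H; lia.
  - apply H; lia.
Qed.

Fixpoint sumf (f : nat -> R) (n : nat) : R :=
  match n with O => 0 | S k => sumf f k + f k end.

Lemma der_mu x s mu k : 0 < s ->
  is_derive (fun t => cauchy_lik x k t s) mu
    (cauchy_lik x k mu s * sumf (fun j => 2 * (x j - mu) / ((x j - mu)^2 + s^2)) k).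
Proof.
  intros Hs. induction k.
  - simpl. auto_derive; auto; ring.
  - change (fun t => cauchy_lik x (S k) t s) with
      (fun t => mult (cauchy_lik x k t s) (s / (PI * ((x k - t) ^ 2 + s ^ 2)))).
    assert (Hg : is_derive (fun t => s / (PI * ((x k - t) ^ 2 + s ^ 2))) mu
                  (s / (PI * ((x k - mu) ^ 2 + s ^ 2)) * (2 * (x k - mu) / ((x k - mu)^2 + s^2)))).
    { assert (H1 := sumsq_pos (x k - mu) s Hs). assert (HP := PI_RGT_0).
      auto_derive.
      - apply Rgt_not_eq, Rmult_lt_0_compat; lra.
      - field. lra. }
    pose proof (is_derive_mult _ _ _ _ _ IHk Hg) as D.
    assert (Hc : forall n m : R_AbsRing, mult n m = mult m n) by (intros; apply Rmult_comm).
    specialize (D Hc).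
    replace (cauchy_lik x (S k) mu s *
       sumf (fun j : nat => 2 * (x j - mu) / ((x j - mu) ^ 2 + s ^ 2)) (S k))
    with (plus (mult (cauchy_lik x k mu s * sumf (fun j : nat => 2 * (x j - mu) / ((x j - mu) ^ 2 + s ^ 2)) k) (s / (PI * ((x k - mu) ^ 2 + s ^ 2))))
         (mult (cauchy_lik x k mu s) (s / (PI * ((x k - mu) ^ 2 + s ^ 2)) * (2 * (x k - mu) / ((x k - mu) ^ 2 + s ^ 2))))).
    + exact D.
    + simpl. unfold plus, mult; simpl. ring.
Qed.

Lemma der_s x s mu k : 0 < s ->
  is_derive (fun t => cauchy_lik x k mu t) s
    (cauchy_lik x k mu s * sumf (fun j => ((x j - mu)^2 - s^2) / (s * ((x j - mu)^2 + s^2))) k).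
Proof.
  intros Hs. induction k.
  - simpl. auto_derive; auto; ring.
  - change (fun t => cauchy_lik x (S k) mu t) with
      (fun t => mult (cauchy_lik x k mu t) (t / (PI * ((x k - mu) ^ 2 + t ^ 2)))).
    assert (Hg : is_derive (fun t => t / (PI * ((x k - mu) ^ 2 + t ^ 2))) s
                  (s / (PI * ((x k - mu) ^ 2 + s ^ 2)) * (((x k - mu)^2 - s^2) / (s * ((x k - mu)^2 + s^2))))).
    { assert (H1 := sumsq_pos (x k - mu) s Hs). assert (HP := PI_RGT_0).
      auto_derive.
      - apply Rgt_not_eq, Rmult_lt_0_compat; lra.
      - field. lra. }
    pose proof (is_derive_mult _ _ _ _ _ IHk Hg) as D.
    assert (Hc : forall n m : R_AbsRing, mult n m = mult m n) by (intros; apply Rmult_comm).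
    specialize (D Hc).
    replace (cauchy_lik x (S k) mu s *
       sumf (fun j => ((x j - mu)^2 - s^2) / (s * ((x j - mu)^2 + s^2))) (S k))
    with (plus (mult (cauchy_lik x k mu s * sumf (fun j => ((x j - mu)^2 - s^2) / (s * ((x j - mu)^2 + s^2))) k) (s / (PI * ((x k - mu) ^ 2 + s ^ 2))))
         (mult (cauchy_lik x k mu s) (s / (PI * ((x k - mu) ^ 2 + s ^ 2)) * (((x k - mu)^2 - s^2) / (s * ((x k - mu)^2 + s^2)))))).
    + exact D.
    + simpl. unfold plus, mult; simpl. ring.
Qed.

Lemma max_deriv0 f c l a b : is_derive f c l -> a < c < b ->
  (forall y, a < y < b -> f y <= f c) -> l = 0.
Proof.
  intros D [h1 h2] H.
  apply is_derive_Reals in D.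
  pose (pr := exist (fun l => derivable_pt_lim f c l) l D : derivable_pt f c).
  pose proof (deriv_maximum f a b c pr h1 h2 (fun y p q => H y (conj p q))) as E.
  exact E.
Qed.

Lemma mle_conds n x mu s : is_cauchy_mle n x mu s ->
  sumf (fun j => 2 * (x j - mu) / ((x j - mu)^2 + s^2)) n = 0 /\
  sumf (fun j => ((x j - mu)^2 - s^2) / (s * ((x j - mu)^2 + s^2))) n = 0.
Proof.
  intros [Hs H]. assert (Hp := lik_pos x n mu s Hs). split.
  - assert (E := max_deriv0 _ _ _ (mu - 1) (mu + 1) (der_mu x s mu n Hs)
                  ltac:(lra) (fun y _ => H y s Hs)).
    apply Rmult_integral in E. destruct E; [lra|auto].
  - assert (E := max_deriv0 _ _ _ 0 (2 * s) (der_s x s mu n Hs)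
                  ltac:(lra) (fun y hy => H mu y (proj1 hy))).
    apply Rmult_integral in E. destruct E; [lra|auto].
Qed.

Lemma part1 (n : nat) : (4 <= n)%nat -> Nat.Even n ->
  forall a b : R, 0 < b -> a ^ 2 + b ^ 2 < 1 ->
  exists x : nat -> R, strictly_ordered n x /\ mle_relative_position n x a b.
Proof.
  intros Hn [m Hm] a b Hb Hab.
  assert (Hm2 : (2 <= m)%nat) by lia.
  assert (Hb2 : 0 < b^2) by (apply pow_lt; auto).
  assert (Ha : -1 < a < 1).
  { assert (a*a < 1) by (simpl in Hab; nra).
    split; apply Rnot_le_lt; intro h; nra. }
  set (s1 := a - b^2/(1-a)).
  set (star := fun u => a - b^2/(u-a)).
  assert (Hs1a : s1 < a).
  { unfold s1. assert (0 < b^2/(1-a)) by (apply Rdiv_lt_0_compat; lra). lra. }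
  assert (Hs1 : -1 < s1).
  { unfold s1. assert (b^2/(1-a) < 1 + a); [|lra].
    apply (Rmult_lt_reg_r (1-a)); [lra|].
    replace (b ^ 2 / (1 - a) * (1 - a)) with (b^2) by (field; lra). nra. }
  assert (HM : 0 < INR (m - 1)) by (apply lt_0_INR; lia).
  set (d := (s1 + 1) / INR (m-1)).
  assert (Hd : 0 < d) by (apply Rdiv_lt_0_compat; lra).
  set (L := fun k : nat => -1 + INR k * d).
  assert (LS : forall k, L (S k) = L k + d) by (intros; unfold L; rewrite S_INR; ring).
  assert (Lle : forall k, (k <= m - 1)%nat -> L k <= s1).
  { intros k Hk. unfold L. apply le_INR in Hk.
    assert (INR (m-1) * d = s1 + 1) by (unfold d; field; lra).
    assert (INR k * d <= INR (m-1) * d) by (apply Rmult_le_compat_r; lra). lra. }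
  assert (L0 : L 0%nat = -1) by (unfold L; simpl; ring).
  assert (Lm : L (m-1)%nat = s1) by (unfold L, d; field; lra).
  assert (starmono : forall u v, u < v < a -> star u < star v).
  { intros u v [h1 h2]. unfold star.
    assert (b^2/(a-u) < b^2/(a-v)).
    { apply Rmult_lt_compat_l; auto. apply Rinv_lt_contravar; nra. }
    replace (b^2/(u-a)) with (- (b^2/(a-u))) by (field; lra).
    replace (b^2/(v-a)) with (- (b^2/(a-v))) by (field; lra). lra. }
  assert (starm1 : a < star (-1)).
  { unfold star. replace (b^2/(-1-a)) with (- (b^2/(1+a))) by (field; lra).
    assert (0 < b^2/(1+a)) by (apply Rdiv_lt_0_compat; lra). lra. }
  assert (stars1 : star s1 = 1).
  { assert (e : s1 - a = -(b^2/(1-a))) by (unfold s1; ring).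
    unfold star. rewrite e. field. split; lra. }
  set (x := fun j : nat => if Nat.ltb j m then L j else star (L (j - m)%nat)).
  assert (xL : forall j, (j < m)%nat -> x j = L j).
  { intros j hj. unfold x. destruct (Nat.ltb_spec j m); [auto|lia]. }
  assert (xR : forall j, (m <= j)%nat -> x j = star (L (j - m)%nat)).
  { intros j hj. unfold x. destruct (Nat.ltb_spec j m); [lia|auto]. }
  exists x. split.
  - intros i Hi.
    destruct (Nat.lt_ge_cases (S i) m) as [h|h].
    + rewrite (xL i) by lia. rewrite (xL (S i)) by lia. rewrite LS. lra.
    + destruct (Nat.eq_dec (S i) m) as [e|e].
      * rewrite (xL i) by lia. rewrite (xR (S i)) by lia.
        replace (S i - m)%nat with 0%nat by lia. rewrite L0.
        assert (L i <= s1) by (apply Lle; lia). lra.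
      * rewrite (xR i) by lia. rewrite (xR (S i)) by lia.
        replace (S i - m)%nat with (S (i - m)) by lia.
        apply starmono. rewrite LS.
        assert (L (S (i - m)) <= s1) by (apply Lle; lia). rewrite LS in H. lra.
  - exists a, b. split.
    + split; auto. intros mu' s' Hs'.
      replace n with (m + m)%nat by lia. rewrite !lik_add.
      apply pair_prod; auto. intros j Hj.
      rewrite (xL j) by lia. rewrite (xR (m + j)%nat) by lia.
      replace (m + j - m)%nat with j by lia.
      apply pair_ineq; auto.
      assert (L j <= s1) by (apply Lle; lia).
      unfold star. field. lra.
    + unfold relative_position. rewrite (xL 0%nat) by lia. rewrite (xR (n-1)%nat) by lia.
      replace (n - 1 - m)%nat with (m - 1)%nat by lia.
      rewrite L0, Lm, stars1. split; field.
Qed.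

Lemma sumf_scale c f n : sumf (fun j => c * f j) n = c * sumf f n.
Proof. induction n; simpl; [ring|rewrite IHn; ring]. Qed.

Lemma sumf_ext f g n : (forall j, f j = g j) -> sumf f n = sumf g n.
Proof. intros H; induction n; simpl; [auto|rewrite IHn, H; auto]. Qed.

Lemma sum_le_all r eta n : (forall j, (j < n)%nat -> r j <= eta) -> sumf r n <= INR n * eta.
Proof.
  induction n; intros H; simpl sumf. simpl; lra.
  rewrite S_INR. assert (r n <= eta) by (apply H; lia).
  assert (sumf r n <= INR n * eta) by (apply IHn; intros; apply H; lia). lra.
Qed.

Lemma sum_le_one r eta n : (forall j, (j < n)%nat -> r j <= eta) ->
  forall j, (j < n)%nat -> sumf r n <= r j + (INR n - 1) * eta.
Proof.
  induction n; intros H j Hj. lia.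
  simpl sumf. rewrite S_INR.
  destruct (Nat.eq_dec j n) as [e|e].
  - subst j. assert (sumf r n <= INR n * eta) by (apply sum_le_all; intros; apply H; lia). lra.
  - assert (sumf r n <= r j + (INR n - 1) * eta) by (apply IHn; [intros; apply H|]; lia).
    assert (r n <= eta) by (apply H; lia). lra.
Qed.

Lemma parity (m : nat -> R) k n :
  (forall j, (j < n)%nat -> 1 - k <= m j <= 1 \/ -1 <= m j <= -(1 - k)) ->
  exists z : Z, Rabs (sumf m n - (2 * IZR z + INR n)) <= INR n * k.
Proof.
  induction n; intros H.
  - exists 0%Z. simpl sumf. replace (0 - (2 * IZR 0 + INR 0)) with 0 by (simpl; ring). rewrite Rabs_R0. simpl; lra.
  - destruct IHn as [z Hz]. { intros; apply H; lia. }
    simpl sumf. rewrite S_INR.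
    destruct (H n ltac:(lia)) as [[h1 h2]|[h1 h2]].
    + exists z.
      replace (sumf m n + m n - (2 * IZR z + (INR n + 1))) with
        ((sumf m n - (2 * IZR z + INR n)) + (m n - 1)) by ring.
      eapply Rle_trans. apply Rabs_triang.
      assert (Rabs (m n - 1) <= k) by (apply Rabs_le; lra). lra.
    + exists (z - 1)%Z. rewrite minus_IZR.
      replace (sumf m n + m n - (2 * (IZR z - 1) + (INR n + 1))) with
        ((sumf m n - (2 * IZR z + INR n)) + (m n + 1)) by (simpl; ring).
      eapply Rle_trans. apply Rabs_triang.
      assert (Rabs (m n + 1) <= k) by (apply Rabs_le; lra). lra.
Qed.

Lemma ordered_le n x : strictly_ordered n x -> forall j k, (j <= k)%nat -> (k < n)%nat -> x j <= x k.
Proof.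
  intros H j k Hjk. induction Hjk; intros Hk. lra.
  assert (x m < x (S m)) by (apply H; lia). assert (x j <= x m) by (apply IHHjk; lia). lra.
Qed.

Lemma abs_lt_sq a e : 0 < e -> a ^ 2 < e ^ 2 -> Rabs a < e.
Proof.
  intros He H. simpl in H. unfold Rabs. destruct (Rcase_abs a); nra.
Qed.

Lemma odd_int_abs (w : Z) : Z.Odd w -> 1 <= Rabs (IZR w).
Proof.
  intros [p Hp]. destruct (Z_lt_le_dec w 0) as [h|h].
  - assert (w <= -1)%Z by lia. apply IZR_le in H. rewrite Rabs_left; [|lra]. simpl in H. lra.
  - assert (1 <= w)%Z by lia. apply IZR_le in H. rewrite Rabs_right; lra.
Qed.

Lemma part2 (n : nat) : (3 <= n)%nat -> Nat.Odd n ->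
  exists eps : R, 0 < eps /\
    forall a b : R, 0 < b -> a ^ 2 + (b - 1) ^ 2 < eps ^ 2 ->
      ~ (exists x : nat -> R, strictly_ordered n x /\ mle_relative_position n x a b).
Proof.
  intros Hn Hodd.
  set (N := INR n).
  assert (HN : 3 <= N) by (unfold N; replace 3 with (INR 3) by (simpl; ring); apply le_INR; auto).
  set (eta := / (N * N)).
  assert (Heta : 0 < eta) by (unfold eta; apply Rinv_0_lt_compat; nra).
  assert (Heta9 : eta <= / 9).
  { unfold eta. apply Rinv_le_contravar; nra. }
  set (e := eta / 8).
  exists e. split. unfold e; lra.
  intros a b Hb Hab [x [Hx [mu [s [Hmle [Ha Hbb]]]]]].
  destruct (mle_conds n x mu s Hmle) as [S1 S2].
  destruct Hmle as [Hs _].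
  set (X := x (n-1)%nat). set (Y := x 0%nat). fold X Y in Ha, Hbb.
  assert (HXY : Y < X).
  { unfold X, Y. assert (x 0%nat < x 1%nat) by (apply Hx; lia).
    assert (x 1%nat <= x (n-1)%nat) by (apply (ordered_le n x Hx); lia). lra. }
  set (h := (X - Y) / 2).
  assert (Hh : 0 < h) by (unfold h; lra).
  assert (Hs_eq : s = b * h) by (rewrite Hbb; unfold h; field; lra).
  assert (Hmu_eq : mu = (X + Y)/2 + a * h) by (rewrite Ha; unfold h; field; lra).
  assert (Hae : Rabs a < e).
  { apply abs_lt_sq. unfold e; lra. pose proof (pow2_ge_0 (b-1)). lra. }
  assert (Hbe : 1 - e < b).
  { assert (Rabs (b - 1) < e).
    { apply abs_lt_sq. unfold e; lra. pose proof (pow2_ge_0 a). lra. }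
    apply Rabs_def2 in H. lra. }
  set (r := fun j => ((x j - mu)^2 - s^2) / ((x j - mu)^2 + s^2)).
  set (m := fun j => 2 * (x j - mu) * s / ((x j - mu)^2 + s^2)).
  assert (Sr : sumf r n = 0).
  { rewrite (sumf_ext r (fun j => s * (((x j - mu)^2 - s^2) / (s * ((x j - mu)^2 + s^2))))).
    rewrite sumf_scale, S2. ring.
    intros j. unfold r. assert (Hq := sumsq_pos (x j - mu) s Hs). field. repeat split; lra. }
  assert (Sm : sumf m n = 0).
  { rewrite (sumf_ext m (fun j => s * (2 * (x j - mu) / ((x j - mu)^2 + s^2)))).
    rewrite sumf_scale, S1. ring.
    intros j. unfold m. assert (Hq := sumsq_pos (x j - mu) s Hs). field. lra. }
  assert (Hdenpos : forall j, 0 < (x j - mu)^2 + s^2) by (intros; apply sumsq_pos; auto).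
  assert (Key : (1 - eta) * (1 + e)^2 <= (1 + eta) * (1 - e)^2).
  { assert (I : (1 + eta) * (1 - e)^2 - (1 - eta) * (1 + e)^2 = 2 * eta * (1 + e^2) - 4 * e) by ring.
    assert (0 <= e^2) by apply pow2_ge_0. unfold e in *. nra. }
  assert (Hae' : - e < a < e) by (apply Rabs_def2 in Hae; lra).
  assert (Hrle : forall j, (j < n)%nat -> r j <= eta).
  { intros j Hj.
    assert (HY : Y <= x j) by (unfold Y; apply (ordered_le n x Hx); lia).
    assert (HX : x j <= X) by (unfold X; apply (ordered_le n x Hx); lia).
    set (d := x j - mu).
    assert (Hd1 : d <= (1 + e) * h).
    { unfold d. rewrite Hmu_eq. assert (- e * h < a * h) by (apply Rmult_lt_compat_r; lra).
      unfold h in *. lra. }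
    assert (Hd2 : - ((1 + e) * h) <= d).
    { unfold d. rewrite Hmu_eq. assert (a * h < e * h) by (apply Rmult_lt_compat_r; lra).
      unfold h in *. lra. }
    assert (Hd : d^2 <= ((1 + e) * h)^2).
    { assert (0 <= ((1 + e) * h - d) * ((1 + e) * h + d)) by (apply Rmult_le_pos; lra).
      simpl. nra. }
    assert (Hsb : ((1 - e) * h)^2 <= s^2).
    { rewrite Hs_eq. assert (0 < 1 - e) by (unfold e; lra).
      assert (0 <= (1 - e) * h) by (apply Rmult_le_pos; lra).
      assert ((1 - e) * h <= b * h) by (apply Rmult_le_compat_r; lra).
      apply pow_incr. lra. }
    assert (Hh2 : 0 < h^2) by (apply pow_lt; lra).
    assert (K2 : (1 - eta) * d^2 <= (1 + eta) * s^2).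
    { assert ((1 - eta) * d^2 <= (1 - eta) * ((1 + e) * h)^2) by (apply Rmult_le_compat_l; lra).
      assert ((1 + eta) * ((1 - e) * h)^2 <= (1 + eta) * s^2) by (apply Rmult_le_compat_l; lra).
      assert ((1 - eta) * ((1 + e) * h)^2 <= (1 + eta) * ((1 - e) * h)^2).
      { replace ((1 - eta) * ((1 + e) * h)^2) with (((1 - eta) * (1 + e)^2) * h^2) by ring.
        replace ((1 + eta) * ((1 - e) * h)^2) with (((1 + eta) * (1 - e)^2) * h^2) by ring.
        apply Rmult_le_compat_r; lra. }
      lra. }
    unfold r. fold d. assert (Hq := Hdenpos j). fold d in Hq.
    apply (Rmult_le_reg_r (d^2 + s^2)); auto.
    replace ((d ^ 2 - s ^ 2) / (d ^ 2 + s ^ 2) * (d ^ 2 + s ^ 2)) with (d^2 - s^2) by (field; lra).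
    lra. }
  set (rho := (N - 1) * eta).
  assert (Hrho : eta <= rho) by (unfold rho; nra).
  assert (Hr2 : forall j, (j < n)%nat -> (r j)^2 <= rho^2).
  { intros j Hj. assert (h1 := Hrle j Hj).
    assert (h2 := sum_le_one r eta n Hrle j Hj). rewrite Sr in h2. fold N in h2.
    assert (0 <= (rho - r j) * (rho + r j)) by (apply Rmult_le_pos; unfold rho in *; lra).
    simpl. nra. }
  assert (Hrm : forall j, (r j)^2 + (m j)^2 = 1).
  { intros j. unfold r, m. assert (Hq := Hdenpos j). field. lra. }
  assert (Hm : forall j, (j < n)%nat ->
            1 - rho^2 <= m j <= 1 \/ -1 <= m j <= -(1 - rho^2)).
  { intros j Hj. assert (A1 := Hr2 j Hj). assert (A2 := Hrm j).
    assert (B1 : 1 - rho^2 <= (m j)^2) by (pose proof (pow2_ge_0 (r j)); lra).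
    assert (B2 : (m j)^2 <= 1) by (pose proof (pow2_ge_0 (r j)); lra).
    simpl in B1, B2. rewrite Rmult_1_r in B1, B2.
    destruct (Rle_lt_dec 0 (m j)) as [p|p].
    - left. assert (m j <= 1) by nra. split; nra.
    - right. assert (-1 <= m j) by nra. split; nra. }
  destruct (parity m (rho^2) n Hm) as [z Hz].
  rewrite Sm in Hz. fold N in Hz.
  assert (Hsmall : N * rho^2 < 1).
  { unfold rho, eta. replace (N * ((N - 1) * / (N * N)) ^ 2) with ((N-1)^2 / (N^3)) by (field; lra).
    assert (0 < N^3) by (apply pow_lt; lra).
    apply (Rmult_lt_reg_r (N^3)); auto.
    replace ((N - 1) ^ 2 / N ^ 3 * N ^ 3) with ((N-1)^2) by (field; lra).
    simpl. nra. }
  destruct Hodd as [p Hp].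
  assert (Hodd' : Z.Odd (2 * z + Z.of_nat n)).
  { exists (z + Z.of_nat p)%Z. rewrite Hp. lia. }
  assert (E : 2 * IZR z + N = IZR (2 * z + Z.of_nat n)).
  { unfold N. rewrite INR_IZR_INZ, plus_IZR, mult_IZR. reflexivity. }
  assert (W := odd_int_abs _ Hodd').
  rewrite <- E in W.
  replace (0 - (2 * IZR z + N)) with (- (2 * IZR z + N)) in Hz by ring.
  rewrite Rabs_Ropp in Hz. lra.
Qed.

Theorem mainTheorem11 :
  (forall n : nat, (4 <= n)%nat -> Nat.Even n ->
     forall a b : R, 0 < b -> a ^ 2 + b ^ 2 < 1 ->
       exists x : nat -> R, strictly_ordered n x /\ mle_relative_position n x a b)
  /\
  (forall n : nat, (3 <= n)%nat -> Nat.Odd n ->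
     exists eps : R, 0 < eps /\
       forall a b : R, 0 < b -> a ^ 2 + (b - 1) ^ 2 < eps ^ 2 ->
         ~ (exists x : nat -> R, strictly_ordered n x /\ mle_relative_position n x a b)).
Proof. split; [exact part1 | exact part2]. Qed.
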